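(* Let $n\ge 2$ and assume the standing assumptions in the context hold. Suppose $\operatorname{rank}(\Psi_{t,t+1})=n$ for all $1\le t\le\sigma-1$. Define $\Upsilon(t,t+1)=\hat{\mathcal O}_{t+1}^\dagger\mathcal Z_{t,t+1}\Psi_{t,t+1}^\dagger$ for $1\le t\le\sigma-1$. For $\mu\in\mathbb{S}$ define $$\Upsilon(\mu,1)=\Upsilon(1,2)^{-1}\Upsilon(2,3)^{-1}\cdots\Upsilon(\mu-1,\mu)^{-1},$$ with $\Upsilon(1,1)=I_n$. Set $$\check A_\mu=\Upsilon(\mu,1)\hat A_\mu\Upsilon(\mu,1)^{-1},\quad \check B_\mu=\Upsilon(\mu,1)\hat B_\mu,\quad \check C_\mu=\hat C_\mu\Upsilon(\mu,1)^{-1},\quad \check D_\mu=\hat D_\mu,$$ and let $\check{\mathcal P}=\{(\check A_\mu,\check B_\mu,\check C_\mu,\check D_\mu)\}_{\mu\in\mathbb{S}}$. Then $\Upsilon(\mu,1)=T_1^{-1}T_\mu$ for every $\mu$. Moreover, the LSS with discrete states $\check{\mathcal P}$ has the same input-output map as the true LSS. That is, for every hybrid input (arbitrary switching sequence, with no dwell-time restriction, and arbitrary continuous input) and every initial state $x(0)$, the output of the LSS with discrete states $\check{\mathcal P}$ started from $T_1^{-1}x(0)$ equals the output of the true LSS started from $x(0)$. In particular, the Markov parameters of the two systems coincide.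
   Context: **System data.** Consider the true LSS $$x(k+1)=A_{\varphi(k)}x(k)+B_{\varphi(k)}u(k),\qquad y(k)=C_{\varphi(k)}x(k)+D_{\varphi(k)}u(k),$$ with state dimension $n$ and discrete states $\mathcal P_j=(A_j,B_j,C_j,D_j)$, $j\in\mathbb{S}=\{1,\dots,\sigma\}$. Data $(u(k),\varphi(k),y(k))$, $k\in[1,N]$, are observed, and $\varphi$ is surjective onto $\mathbb{S}$. **Switching times and dwell times.** Write $k_0=1<k_1<\dots<k_{i^*}<k_{i^*+1}=N$, with $\varphi$ constant on each $[k_i,k_{i+1})$ and changing at each $k_i$, $1\le i\le i^*$. Set $\delta_*=\min_i(k_{i+1}-k_i)$. **Standing assumptions.** - Each $\mathcal P_j$ is minimal of McMillan degree $n$, has invertible $A_j$, and is BIBO stable. - $\delta_*\ge n$ for the observed data. - Estimates $\hat{\mathcal P}_j=(\hat A_j,\hat B_j,\hat C_j,\hat D_j)$, one per mode, satisfy $$\hat A_j=T_j^{-1}A_jT_j,\quad \hat B_j=T_j^{-1}B_j,\quad \hat C_j=C_jT_j,\quad \hat D_j=D_j$$ for unknown nonsingular $T_j$. **Constructions.** Let $q=\delta_*-1$, and let $$\hat{\mathcal O}_j=[\hat C_j^T\ (\hat C_j\hat A_j)^T\cdots(\hat C_j\hat A_j^{q})^T]^T.$$ Let $\hat\Gamma_j$ be the block lower-triangular Toeplitz matrix with $(q+1)\times(q+1)$ blocks, diagonal blocks $\hat D_j$, and $(r,s)$ block $\hat C_j\hat A_j^{r-s-1}\hat B_j$ for $r>s$.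 For $1\le i\le i^*$, write $\nu=\varphi(k_{i-1})$ and $\mu=\varphi(k_i)$, and define: - $\hat x(k_{i-1})=\hat{\mathcal O}_\nu^\dagger(Y_{i-1}-\hat\Gamma_\nu U_{i-1})$, with $Y_{i-1},U_{i-1}$ the stacked outputs and inputs over $[k_{i-1},k_{i-1}+q]$, and $X^\dagger=(X^TX)^{-1}X^T$; - $\kappa_{i-1}=\hat A_\nu^{k_i-k_{i-1}}\hat x(k_{i-1})+\sum_{l=k_{i-1}}^{k_i-1}\hat A_\nu^{k_i-l-1}\hat B_\nu u(l)$; - $\zeta_i(k)=y(k)-\hat D_\mu u(k)-\sum_{l=k_i}^{k-1}\hat C_\mu\hat A_\mu^{k-l-1}\hat B_\mu u(l)$ for $k\in[k_i,k_{i+1})$; - $Z_i=[\zeta_i(k_i)^T\cdots\zeta_i(k_i+q)^T]^T$. Let $\mathcal N_{\nu,\mu}=\{i\in[1,i^*]:\varphi(k_{i-1})=\nu,\ \varphi(k_i)=\mu\}$. Let $\Psi_{\nu,\mu}$ have columns $\kappa_{i-1}$ and $\mathcal Z_{\nu,\mu}$ have columns $Z_i$, for $i\in\mathcal N_{\nu,\mu}$ in increasing order. Set $\Psi^\dagger=\Psi^T(\Psi\Psi^T)^{-1}$. *)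

(* Defs.v *)
(* Modes are 0-based natural numbers 0..sigma-1. *)
From HB Require Import structures.
From mathcomp Require Import all_boot all_order all_algebra.
Set Implicit Arguments. Unset Strict Implicit. Unset Printing Implicit Defensive.
Import Order.TTheory GRing.Theory Num.Theory.
Local Open Scope ring_scope.

Section Defs.
Variable R : realFieldType.

Fixpoint mxpow (n : nat) (A : 'M[R]_n) (k : nat) : 'M[R]_n :=
  if k is k'.+1 then A *m mxpow A k' else 1%:M.

Lemma blk_mod_lt (q p : nat) (r : 'I_(q * p)) : (r %% p < p)%N.
Proof.
case: p r => [|p] r; last by rewrite ltn_pmod.
by case: r => /= r; rewrite muln0.
Qed.

Definition blk_row (q p : nat) (r : 'I_(q * p)) : 'I_p := Ordinal (blk_mod_lt r).

(* vertical stack [F 0; F 1; ...; F (q-1)] of q blocks of size p x c *)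
Definition colstack (q p c : nat) (F : nat -> 'M[R]_(p, c)) : 'M[R]_(q * p, c) :=
  \matrix_(r, j) F (r %/ p)%N (blk_row r) j.

(* q x q block matrix with (r,s) block F r s of size p x m (0-based) *)
Definition blockmx (q p m : nat) (F : nat -> nat -> 'M[R]_(p, m)) : 'M[R]_(q * p, q * m) :=
  \matrix_(r, s) F (r %/ p)%N (s %/ m)%N (blk_row r) (blk_row s).

Definition pinvL (a b : nat) (X : 'M[R]_(a, b)) : 'M[R]_(b, a) :=
  invmx (X^T *m X) *m X^T.
Definition pinvR (a b : nat) (X : 'M[R]_(a, b)) : 'M[R]_(b, a) :=
  X^T *m invmx (X *m X^T).

Variables n m p : nat.

Definition obsmx (q : nat) (C : 'M[R]_(p, n)) (A : 'M[R]_n) : 'M[R]_(q.+1 * p, n) :=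
  @colstack q.+1 p n (fun r => C *m mxpow A r).

Definition toeplitz (q : nat) (A : 'M[R]_n) (B : 'M[R]_(n, m)) (C : 'M[R]_(p, n))
  (D : 'M[R]_(p, m)) : 'M[R]_(q.+1 * p, q.+1 * m) :=
  @blockmx q.+1 p m (fun r s => if r == s then D
                               else if (s < r)%N then C *m mxpow A (r - s - 1) *m B
                               else 0).

Definition sigstack (q c : nat) (v : nat -> 'cV[R]_c) (k0 : nat) : 'cV[R]_(q.+1 * c) :=
  @colstack q.+1 c 1 (fun r => v (k0 + r)%N).

Fixpoint lss_state (A : nat -> 'M[R]_n) (B : nat -> 'M[R]_(n, m)) (phi : nat -> nat)
  (u : nat -> 'cV[R]_m) (x0 : 'cV[R]_n) (k : nat) : 'cV[R]_n :=
  if k is k'.+1 then A (phi k') *m lss_state A B phi u x0 k' + B (phi k') *m u k'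
  else x0.

Definition lss_out (A : nat -> 'M[R]_n) (B : nat -> 'M[R]_(n, m))
  (C : nat -> 'M[R]_(p, n)) (D : nat -> 'M[R]_(p, m)) (phi : nat -> nat)
  (u : nat -> 'cV[R]_m) (x0 : 'cV[R]_n) (k : nat) : 'cV[R]_p :=
  C (phi k) *m lss_state A B phi u x0 k + D (phi k) *m u k.

Definition bibo_stable (A : 'M[R]_n) (B : 'M[R]_(n, m)) (C : 'M[R]_(p, n))
  (D : 'M[R]_(p, m)) : Prop :=
  forall u : nat -> 'cV[R]_m,
    (exists M : R, forall k (i : 'I_m), `|u k i 0| <= M) ->
    exists M' : R, forall k (i : 'I_p),
      `|lss_out (fun=> A) (fun=> B) (fun=> C) (fun=> D) (fun=> 0%N) u 0 k i 0| <= M'.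

Definition minimal_lti (A : 'M[R]_n) (B : 'M[R]_(n, m)) (C : 'M[R]_(p, n)) : Prop :=
  forall (n' : nat) (A' : 'M[R]_n') (B' : 'M[R]_(n', m)) (C' : 'M[R]_(p, n')),
    (forall k, C' *m mxpow A' k *m B' = C *m mxpow A k *m B) -> (n <= n')%N.

(* product A_{w_last} ... A_{w_first} *)
Definition Aword (A : nat -> 'M[R]_n) (w : seq nat) : 'M[R]_n :=
  foldl (fun M i => A i *m M) 1%:M w.

Definition lss_markov (A : nat -> 'M[R]_n) (B : nat -> 'M[R]_(n, m))
  (C : nat -> 'M[R]_(p, n)) (j0 : nat) (w : seq nat) (j1 : nat) : 'M[R]_(p, m) :=
  C j1 *m Aword A w *m B j0.

Definition delta_star (ks : nat -> nat) (istar N : nat) : nat :=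
  \big[minn/N]_(i < istar.+1) (ks i.+1 - ks i)%N.

Section Construct.
Variables (hA : nat -> 'M[R]_n) (hB : nat -> 'M[R]_(n, m))
  (hC : nat -> 'M[R]_(p, n)) (hD : nat -> 'M[R]_(p, m))
  (y : nat -> 'cV[R]_p) (u : nat -> 'cV[R]_m) (phi : nat -> nat)
  (ks : nat -> nat) (istar N : nat).

Definition qq : nat := (delta_star ks istar N).-1.

Definition xhat (nu k0 : nat) : 'cV[R]_n :=
  pinvL (obsmx qq (hC nu) (hA nu)) *m
    (sigstack qq y k0 - toeplitz qq (hA nu) (hB nu) (hC nu) (hD nu) *m sigstack qq u k0).

(* kappa_{i-1}, with k0 = k_{i-1}, k1 = k_i *)
Definition kappa (nu k0 k1 : nat) : 'cV[R]_n :=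
  mxpow (hA nu) (k1 - k0) *m xhat nu k0
  + \sum_(k0 <= l < k1) mxpow (hA nu) (k1 - l - 1) *m hB nu *m u l.

(* zeta_i(k), with k1 = k_i *)
Definition zeta (mu k1 k : nat) : 'cV[R]_p :=
  y k - hD mu *m u k
  - \sum_(k1 <= l < k) hC mu *m mxpow (hA mu) (k - l - 1) *m hB mu *m u l.

Definition Zvec (mu k1 : nat) : 'cV[R]_(qq.+1 * p) := sigstack qq (zeta mu k1) k1.

Definition transitions (nu mu : nat) : seq nat :=
  [seq i <- iota 1 istar | (phi (ks i.-1) == nu) && (phi (ks i) == mu)].

Definition Psi (nu mu : nat) : 'M[R]_(n, size (transitions nu mu)) :=
  \matrix_(r, c) kappa nu (ks (nth 0 (transitions nu mu) c).-1)
                          (ks (nth 0 (transitions nu mu) c)) r 0.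

Definition Zmat (nu mu : nat) : 'M[R]_(qq.+1 * p, size (transitions nu mu)) :=
  \matrix_(r, c) Zvec mu (ks (nth 0 (transitions nu mu) c)) r 0.

(* Upsilon(t, t+1) (0-based modes t, t+1) *)
Definition Ups (t : nat) : 'M[R]_n :=
  pinvL (obsmx qq (hC t.+1) (hA t.+1)) *m Zmat t t.+1 *m pinvR (Psi t t.+1).

(* Upsilon(mu,1) = Ups(0)^-1 Ups(1)^-1 ... Ups(mu-1)^-1 ; identity for mu = 0 *)
Definition Ups1 (mu : nat) : 'M[R]_n :=
  foldr (fun t M => invmx (Ups t) *m M) 1%:M (iota 0 mu).

Definition checkA (mu : nat) : 'M[R]_n := Ups1 mu *m hA mu *m invmx (Ups1 mu).
Definition checkB (mu : nat) : 'M[R]_(n, m) := Ups1 mu *m hB mu.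
Definition checkC (mu : nat) : 'M[R]_(p, n) := hC mu *m invmx (Ups1 mu).
Definition checkD (mu : nat) : 'M[R]_(p, m) := hD mu.

End Construct.
End Defs.

(* Main.v *)
Require Import Defs.
From HB Require Import structures.
From mathcomp Require Import all_boot all_order all_algebra.
From Stdlib Require Import Lia.
From mathcomp Require Import zify.
Set Implicit Arguments. Unset Strict Implicit. Unset Printing Implicit Defensive.
Import Order.TTheory GRing.Theory Num.Theory.
Local Open Scope ring_scope.

Section Obs.
Variable R : realFieldType.

Lemma mxpowE n' (A : 'M[R]_n'.+1) k : mxpow A k = A ^+ k.
Proof. elim: k => [|k IH] //=; by rewrite IH exprS mulmxE. Qed.

Lemma mxpowS n (A : 'M[R]_n) k : mxpow A k.+1 = mxpow A k *m A.
Proof.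
elim: k => [|k IH] /=; first by rewrite mulmx1 mul1mx.
by rewrite -mulmxA -IH.
Qed.

Lemma mxpowD n (A : 'M[R]_n) j k : mxpow A (j + k) = mxpow A j *m mxpow A k.
Proof. elim: j => [|j IH] /=; first by rewrite mul1mx. by rewrite IH mulmxA. Qed.

Lemma CA_in n' m (C : 'M[R]_(m, n'.+1)) (A : 'M[R]_n'.+1) k :
  (C *m mxpow A k <= \sum_(i < n'.+1) <<C *m mxpow A i>>)%MS.
Proof.
set W := (\sum_(i < n'.+1) _)%MS.
elim: k {-2}k (leqnn k) => [|K IH] k lek.
  move: lek; rewrite leqn0 => /eqP ->.
  by apply: (sumsmx_sup ord0) => //; rewrite genmxE.
case: (ltnP k n'.+1) => hk.
  by apply: (sumsmx_sup (Ordinal hk)) => //; rewrite genmxE.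
have CH := Cayley_Hamilton A.
set q := char_poly A in CH.
have qdef : q = \sum_(i < n'.+2) q`_i *: 'X^i.
  by rewrite -(size_char_poly A) -poly_def coefK.
have : \sum_(i < n'.+2) q`_i *: A ^+ i = 0.
  have H : horner_mx A (\sum_(i < n'.+2) q`_i *: 'X^i) = 0 by rewrite -qdef.
  rewrite -[RHS]H raddf_sum; apply: eq_bigr => i _.
  by rewrite /= horner_mxZ rmorphXn /= horner_mx_X.
rewrite big_ord_recr /=.
have -> : q`_n'.+1 = 1.
  by have := char_poly_monic A; rewrite monicE /lead_coef size_char_poly => /eqP.
rewrite scale1r => /eqP; rewrite addrC addr_eq0 => /eqP An.
have -> : k = ((k - n'.+1) + n'.+1)%N by rewrite subnK.
rewrite mxpowD (mxpowE A n'.+1) An mulmxN mulmx_sumr mulmxN eqmx_opp mulmx_sumr. apply: summx_sub => i _.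
rewrite -scalemxAr -scalemxAr scalemx_sub //.
rewrite -mxpowE -mxpowD; apply: IH.
by move: lek hk (ltn_ord i); lia.
Qed.

Lemma obs_min n' m p (A : 'M[R]_n'.+1) (B : 'M[R]_(n'.+1, m)) (C : 'M[R]_(p, n'.+1)) :
  minimal_lti A B C -> forall v : 'cV_n'.+1,
  (forall k, (k < n'.+1)%N -> C *m mxpow A k *m v = 0) -> v = 0.
Proof.
move=> Hmin v hv.
set W := (\sum_(i < n'.+1) <<C *m mxpow A i>>)%MS.
have WA : (W *m A <= W)%MS.
  rewrite sumsmxMr; apply/sumsmx_subP => i _.
  by rewrite (eqmxMr _ (genmxE _)) -mulmxA -mxpowS; apply: CA_in.
have rk : (n'.+1 <= \rank W)%N.
  set K := row_base W.
  have KW := eq_row_base W.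
  have CK k : (C *m mxpow A k <= K)%MS by rewrite KW; apply: CA_in.
  have KA : (K *m A <= K)%MS.
    rewrite KW; apply: submx_trans WA; apply: submxMr; rewrite KW; exact: submx_refl.
  pose A' := K *m A *m pinvmx K; pose B' := K *m B; pose C' := C *m pinvmx K.
  have A'K : A' *m K = K *m A by rewrite /A' mulmxKpV.
  have C'K : C' *m K = C by rewrite /C' mulmxKpV //; have := CK 0%N; rewrite /= mulmx1.
  have powK k : mxpow A' k *m K = K *m mxpow A k.
    elim: k => [|k IH] /=; first by rewrite mul1mx mulmx1.
    by rewrite -mulmxA IH mulmxA A'K -mulmxA.
  apply: (Hmin _ A' B' C') => k.
  by rewrite /B' mulmxA -(mulmxA C') powK mulmxA C'K.
have WF : row_full W by rewrite /row_full eqn_leq rank_leq_col rk.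
have [X XW] := row_fullP WF.
have Wv : W *m v = 0.
  have [u ->] := sub_sumsmxP (submx_refl W).
  rewrite mulmx_suml big1 // => i _.
  have : (<<C *m mxpow A i>> <= C *m mxpow A i)%MS by rewrite genmxE.
  case/submxP => Y ->.
  by rewrite -!mulmxA (mulmxA C) hv // !mulmx0.
by rewrite -(mul1mx v) -XW -mulmxA Wv mulmx0.
Qed.

Lemma rv_sq0 k (w : 'rV[R]_k) : w *m w^T = 0 -> w = 0.
Proof.
move=> h; apply/rowP => j; rewrite mxE.
have : (w *m w^T) 0 0 = 0 by rewrite h mxE.
rewrite mxE => hs.
have H0 : forall i : 'I_k, predT i -> 0 <= w 0 i * w^T i 0.
  by move=> i _; rewrite mxE -expr2 sqr_ge0.
have := psumr_eq0P H0 hs (i:=j) isT.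
by rewrite mxE => /eqP; rewrite mulf_eq0 orbb => /eqP.
Qed.

Lemma pinvL_K a b (X : 'M[R]_(a, b)) :
  (forall v : 'cV_b, X *m v = 0 -> v = 0) -> pinvL X *m X = 1%:M.
Proof.
move=> hX; rewrite /pinvL -mulmxA mulVmx // -row_free_unit.
apply: inj_row_free => w hw.
have h1 : (w *m X^T) *m (w *m X^T)^T = 0.
  by rewrite trmx_mul trmxK mulmxA -(mulmxA w) hw mul0mx.
have h2 := rv_sq0 h1.
have : X *m w^T = 0 by rewrite -(trmxK (X *m w^T)) trmx_mul trmxK h2 trmx0.
by move/hX => h3; rewrite -(trmxK w) h3 trmx0.
Qed.

Lemma pinvR_K a b (X : 'M[R]_(a, b)) : row_free X -> X *m pinvR X = 1%:M.
Proof.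
move=> hX; rewrite /pinvR mulmxA mulmxV // -row_free_unit.
apply: inj_row_free => w hw.
have h1 : (w *m X) *m (w *m X)^T = 0.
  by rewrite trmx_mul mulmxA -(mulmxA w) hw mul0mx.
have h2 := rv_sq0 h1.
by apply/eqP; rewrite -(mulmx_free_eq0 _ hX) h2.
Qed.
End Obs.


Section Stack.
Variable R : realFieldType.

Lemma blk_div_lt q p (r : 'I_(q * p)) : (r %/ p < q)%N.
Proof.
case: p r => [|p] r; first by case: r => /= r; rewrite muln0.
by rewrite ltn_divLR.
Qed.

Lemma colstack_ext q p c (F G : nat -> 'M[R]_(p, c)) :
  (forall r, (r < q)%N -> F r = G r) -> colstack q F = colstack q G.
Proof. by move=> h; apply/matrixP => r j; rewrite !mxE h // blk_div_lt. Qed.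

Lemma colstack_mul q p c d (F : nat -> 'M[R]_(p, c)) (v : 'M[R]_(c, d)) :
  colstack q F *m v = colstack q (fun r => F r *m v).
Proof.
apply/matrixP => r j; rewrite !mxE; apply: eq_bigr => k _; by rewrite !mxE.
Qed.

Lemma colstack_sub q p c (F G : nat -> 'M[R]_(p, c)) :
  colstack q F - colstack q G = colstack q (fun r => F r - G r).
Proof. by apply/matrixP => r j; rewrite !mxE. Qed.

Lemma sum_blk q m (F : nat -> 'I_m -> R) :
  \sum_(s < q * m) F (s %/ m)%N (blk_row s) = \sum_(b < q) \sum_(t < m) F b t.
Proof.
elim: q F => [|q IH] F; first by rewrite !big_ord0.
rewrite (@big_split_ord _ _ _ m (q * m)) big_ord_recl /=; congr (_ + _).
  apply: eq_bigr => i _; have hi := ltn_ord i.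
  rewrite divn_small //; congr (F _ _); apply: val_inj => /=; by rewrite modn_small.
rewrite -(IH (fun b => F b.+1)); apply: eq_bigr => i _.
have hm : (0 < m)%N by case: m i F {IH} => [|m] [] //= i; rewrite muln0.
have e1 : ((m + i) %/ m = (i %/ m).+1)%N.
  by rewrite -{1}(mul1n m) divnMDl.
have e2 : ((m + i) %% m = i %% m)%N by rewrite -{1}(mul1n m) modnMDl.
rewrite /= e1; congr (F _ _); apply: val_inj => /=; exact: e2.
Qed.

Lemma blockmx_mul q p m c (G : nat -> nat -> 'M[R]_(p, m)) (H : nat -> 'M[R]_(m, c)) :
  blockmx q G *m colstack q H = colstack q (fun r => \sum_(s < q) G r s *m H s).
Proof.
apply/matrixP => r j; rewrite !mxE summxE.
have E := @sum_blk q m (fun b t => G (r %/ p)%N b (blk_row r) t * H b t j).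
rewrite /= in E. under eq_bigr do rewrite !mxE. rewrite E.
by apply: eq_bigr => b _; rewrite mxE.
Qed.
End Stack.


Section Helpers.
Variable R : realFieldType.

Lemma sum_shift a b (G : nat -> 'M[R]_(a, b)) k0 r :
  \sum_(k0 <= l < k0 + r) G l = \sum_(0 <= s < r) G (k0 + s)%N.
Proof.
elim: r => [|r IH]; first by rewrite addn0 !big_geq.
by rewrite addnS !big_nat_recr ?leq_addr // IH.
Qed.

Lemma seg_sol n m (A : 'M[R]_n) (B : 'M[R]_(n, m)) (x : nat -> 'cV[R]_n)
  (u : nat -> 'cV[R]_m) k0 d :
  (forall k, (k0 <= k < k0 + d)%N -> x k.+1 = A *m x k + B *m u k) ->
  forall r, (r <= d)%N -> x (k0 + r)%N = mxpow A r *m x k0 +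
     \sum_(k0 <= l < k0 + r) mxpow A (k0 + r - l - 1) *m B *m u l.
Proof.
move=> hx; elim=> [|r IH] hr.
  by rewrite addn0 big_geq // mul1mx addr0.
rewrite addnS hx; last by apply/andP; split; [exact: leq_addr | lia].
rewrite IH; last by lia.
rewrite big_nat_recr ?leq_addr //=.
have -> : ((k0 + r).+1 - (k0 + r) - 1 = 0)%N by lia.
rewrite /= mul1mx mulmxDr mulmxA addrA; congr (_ + _ + _).
rewrite mulmx_sumr; apply: eq_big_nat => l /andP[h1 h2].
have -> : ((k0 + r).+1 - l - 1 = (k0 + r - l - 1).+1)%N by lia.
by rewrite /= !mulmxA.
Qed.

Lemma mxpow_conj n (T A : 'M[R]_n) k : T \in unitmx ->
  mxpow (invmx T *m A *m T) k = invmx T *m mxpow A k *m T.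
Proof.
move=> hT; elim: k => [|k IH] /=; first by rewrite mulmx1 mulVmx.
by rewrite IH !mulmxA -(mulmxA _ T) mulmxV // mulmx1.
Qed.

Lemma markov_hat n m p (T A : 'M[R]_n) (B : 'M[R]_(n, m)) (C : 'M[R]_(p, n)) k :
  T \in unitmx ->
  (C *m T) *m mxpow (invmx T *m A *m T) k *m (invmx T *m B) = C *m mxpow A k *m B.
Proof.
move=> hT; rewrite mxpow_conj // !mulmxA -(mulmxA C) mulmxV // mulmx1.
by rewrite -(mulmxA _ T) mulmxV // mulmx1.
Qed.

Lemma toep_row p m q r (Dm : 'M[R]_(p, m)) (F : nat -> 'M[R]_(p, m)) (w : nat -> 'cV[R]_m) :
  (r < q)%N ->
  \sum_(s < q) (if r == s then Dm else if (s < r)%N then F s else 0) *m w s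
  = Dm *m w r + \sum_(0 <= s < r) F s *m w s.
Proof.
move=> hr.
rewrite -(big_mkord xpredT (fun s => (if r == s then Dm else if (s < r)%N then F s else 0) *m w s)).
rewrite (big_cat_nat _ (n:=r)) //=; last exact: ltnW.
rewrite [\sum_(r <= i < q) _]big_ltn // eqxx addrC -addrA; congr (_ + _).
rewrite [X in X + _]big_nat_cond [X in X + _]big1 ?add0r; last first.
  move=> s /andP[/andP[h1 h2] _]; have -> : (r == s) = false by apply/eqP; lia.
  by case: ltnP => h; [lia | rewrite mul0mx].
rewrite big_nat_cond [RHS]big_nat_cond; apply: eq_bigr => s /andP[/andP[h1 h2] _].
have hrs : r != s by apply/eqP; lia.
by rewrite (negbTE hrs) h2.
Qed.

Lemma colstack_blk q p c (F : nat -> 'M[R]_(p, c)) :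
  colstack q F = 0 -> forall r, (r < q)%N -> F r = 0.
Proof.
move=> h r hr; apply/matrixP => i j.
have hi : (r * p + i < q * p)%N.
  have := ltn_ord i; nia.
have := congr1 (fun M : 'M[R]_(q * p, c) => M (Ordinal hi) j) h; rewrite !mxE /=.
have hp : (0 < p)%N by case: p i {F h hi} => [[]|].
have e1 : ((r * p + i) %/ p = r)%N by rewrite divnMDl // divn_small // addn0.
have e2 : blk_row (Ordinal hi) = i.
  by apply: val_inj => /=; rewrite modnMDl modn_small.
by rewrite e1 e2.
Qed.

Lemma bigminn_le k N0 (F : nat -> nat) i : (i < k)%N ->
  (\big[minn/N0]_(j < k) F j <= F i)%N.
Proof.
elim: k F i => [//|k IH] F i hi; rewrite big_ord_recl /=.
case: i hi => [|i] hi; first exact: geq_minl.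
apply: leq_trans (geq_minr _ _) _.
exact: (IH (fun j => F j.+1) i).
Qed.

Lemma obs_min_gen n m p (A : 'M[R]_n) (B : 'M[R]_(n, m)) (C : 'M[R]_(p, n)) :
  minimal_lti A B C -> forall v : 'cV_n,
  (forall k, (k < n)%N -> C *m mxpow A k *m v = 0) -> v = 0.
Proof.
case: n A B C => [|n'] A B C hm v hv; first by apply/matrixP => [[]].
exact: (obs_min hm hv).
Qed.

Lemma inv_unique n (X Y : 'M[R]_n) : X *m Y = 1%:M -> invmx X = Y.
Proof.
move=> h; have [hX _] := mulmx1_unit h.
by rewrite -[RHS]mul1mx -(mulVmx hX) -mulmxA h mulmx1.
Qed.
End Helpers.


Section Main.
Variables (R : realFieldType) (n m p sigma : nat)
  (A : nat -> 'M[R]_n) (B : nat -> 'M[R]_(n, m))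
  (C : nat -> 'M[R]_(p, n)) (D : nat -> 'M[R]_(p, m))
  (N : nat) (u : nat -> 'cV[R]_m) (phi : nat -> nat) (y : nat -> 'cV[R]_p)
  (x : nat -> 'cV[R]_n)
  (ks : nat -> nat) (istar : nat)
  (hA : nat -> 'M[R]_n) (hB : nat -> 'M[R]_(n, m))
  (hC : nat -> 'M[R]_(p, n)) (hD : nat -> 'M[R]_(p, m))
  (T : nat -> 'M[R]_n).
Hypotheses (Hn2 : (2 <= n)%N)
  (Hphi : forall k, (1 <= k <= N)%N -> (phi k < sigma)%N)
  (Hx : forall k, (1 <= k < N)%N -> x k.+1 = A (phi k) *m x k + B (phi k) *m u k)
  (Hy : forall k, (1 <= k <= N)%N -> y k = C (phi k) *m x k + D (phi k) *m u k)
  (Hks0 : ks 0%N = 1%N) (HksN : ks istar.+1 = N)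
  (Hinc : forall i, (i <= istar)%N -> (ks i < ks i.+1)%N)
  (Hseg : forall i k, (i <= istar)%N -> (ks i <= k < ks i.+1)%N -> phi k = phi (ks i))
  (Hmin : forall j, (j < sigma)%N -> minimal_lti (A j) (B j) (C j))
  (Hdelta : (n <= delta_star ks istar N)%N)
  (HTu : forall j, (j < sigma)%N -> T j \in unitmx)
  (HhA : forall j, (j < sigma)%N -> hA j = invmx (T j) *m A j *m T j)
  (HhB : forall j, (j < sigma)%N -> hB j = invmx (T j) *m B j)
  (HhC : forall j, (j < sigma)%N -> hC j = C j *m T j)
  (HhD : forall j, (j < sigma)%N -> hD j = D j)
  (Hrank : forall t, (t.+1 < sigma)%N -> \rank (Psi hA hB hC hD y u phi ks istar N t t.+1) = n).

Lemma ks_mono i j : (i <= j <= istar.+1)%N -> (ks i <= ks j)%N.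
Proof.
elim: j => [|j IH] /andP[h1 h2]; first by move: h1; rewrite leqn0 => /eqP ->.
case: (ltnP i j.+1) => h.
  apply: leq_trans (IH _) (ltnW (Hinc _)); lia.
by have -> : i = j.+1 by lia.
Qed.

Lemma ks_bnd i : (i <= istar.+1)%N -> (1 <= ks i <= N)%N.
Proof.
move=> hi; apply/andP; split.
  by rewrite -Hks0; apply: ks_mono; rewrite hi.
by rewrite -HksN; apply: ks_mono; rewrite hi leqnn.
Qed.

Lemma gap_ge i : (i <= istar)%N -> (delta_star ks istar N <= ks i.+1 - ks i)%N.
Proof. move=> hi; have := @bigminn_le istar.+1 N (fun i => ks i.+1 - ks i)%N i hi. by []. Qed.

Lemma qqS : (qq ks istar N).+1 = delta_star ks istar N.
Proof. rewrite /qq prednK //; lia. Qed.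

Lemma phi_ks i : (i <= istar.+1)%N -> (phi (ks i) < sigma)%N.
Proof. by move=> hi; apply: Hphi; apply: ks_bnd. Qed.

Lemma seg_state i : (i <= istar)%N -> forall r, (r <= ks i.+1 - ks i)%N ->
  x (ks i + r)%N = mxpow (A (phi (ks i))) r *m x (ks i) +
    \sum_(ks i <= l < ks i + r) mxpow (A (phi (ks i))) (ks i + r - l - 1)
          *m B (phi (ks i)) *m u l.
Proof.
move=> hi; apply: seg_sol => k /andP[h1 h2].
have hk := Hinc hi; have hb := ks_bnd (i:=i.+1) hi.
have hb' := ks_bnd (i:=i) (leqW hi).
rewrite -(Hseg hi (k:=k)); last by apply/andP; split; lia.
apply: Hx; lia.
Qed.

Lemma seg_out i : (i <= istar)%N -> forall r, (r < ks i.+1 - ks i)%N ->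
  y (ks i + r)%N = C (phi (ks i)) *m x (ks i + r)%N + D (phi (ks i)) *m u (ks i + r)%N.
Proof.
move=> hi r hr.
have hb := ks_bnd (i:=i.+1) hi.
have hb' := ks_bnd (i:=i) (leqW hi).
rewrite -(Hseg hi (k:=(ks i + r)%N)); last by apply/andP; split; lia.
apply: Hy; lia.
Qed.

Lemma hat_markov j e : (j < sigma)%N ->
  hC j *m mxpow (hA j) e *m hB j = C j *m mxpow (A j) e *m B j.
Proof. by move=> hj; rewrite HhA // HhB // HhC // markov_hat // HTu. Qed.

Lemma hat_obs j e (v : 'cV[R]_n) : (j < sigma)%N ->
  hC j *m mxpow (hA j) e *m (invmx (T j) *m v) = C j *m mxpow (A j) e *m v.
Proof.
move=> hj; rewrite HhA // HhC // mxpow_conj ?HTu // !mulmxA -(mulmxA (C j)).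
by rewrite mulmxV ?HTu // mulmx1 -(mulmxA _ (T j)) mulmxV ?HTu // mulmx1.
Qed.

Lemma zeta_eq i r : (i <= istar)%N -> (r < ks i.+1 - ks i)%N ->
  zeta hA hB hC hD y u (phi (ks i)) (ks i) (ks i + r)%N =
  hC (phi (ks i)) *m mxpow (hA (phi (ks i))) r *m (invmx (T (phi (ks i))) *m x (ks i)).
Proof.
move=> hi hr; have hj := phi_ks (leqW hi).
rewrite /zeta hat_obs // seg_out // (seg_state hi (ltnW hr)) HhD //.
rewrite addrK mulmxDr mulmxA; apply/eqP; rewrite subr_eq; apply/eqP; congr (_ + _).
rewrite mulmx_sumr; apply: eq_bigr => l _; by rewrite hat_markov // !mulmxA.
Qed.

Lemma gap_qq i r : (i <= istar)%N -> (r < (qq ks istar N).+1)%N -> (r < ks i.+1 - ks i)%N.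
Proof. move=> hi; rewrite qqS => hr; apply: leq_trans hr (gap_ge hi). Qed.

Lemma obs_inj j (v : 'cV[R]_n) : (j < sigma)%N ->
  obsmx (qq ks istar N) (hC j) (hA j) *m v = 0 -> v = 0.
Proof.
move=> hj h; rewrite /obsmx colstack_mul in h.
have hb := colstack_blk h.
have Tv : T j *m v = 0.
  apply: (obs_min_gen (Hmin hj)) => k hk.
  have := hat_obs k (T j *m v) hj; rewrite mulKmx ?HTu // => <-.
  apply: hb; rewrite qqS; lia.
by rewrite -(mulKmx (HTu hj) v) Tv mulmx0.
Qed.

Lemma xhat_eq i : (i <= istar)%N ->
  xhat hA hB hC hD y u ks istar N (phi (ks i)) (ks i) = invmx (T (phi (ks i))) *m x (ks i).
Proof.
move=> hi; have hj := phi_ks (leqW hi).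
rewrite /xhat.
have E : sigstack (qq ks istar N) y (ks i) -
  toeplitz (qq ks istar N) (hA (phi (ks i))) (hB (phi (ks i))) (hC (phi (ks i))) (hD (phi (ks i)))
    *m sigstack (qq ks istar N) u (ks i)
  = obsmx (qq ks istar N) (hC (phi (ks i))) (hA (phi (ks i))) *m (invmx (T (phi (ks i))) *m x (ks i)).
  rewrite /sigstack /toeplitz blockmx_mul colstack_sub /obsmx colstack_mul.
  apply: colstack_ext => r hr.
  rewrite (@toep_row R p m _ r (hD (phi (ks i))) (fun s => hC (phi (ks i)) *m mxpow (hA (phi (ks i))) (r - s - 1) *m hB (phi (ks i))) (fun s => u (ks i + s)%N)) // -zeta_eq ?gap_qq // /zeta opprD addrA; congr (_ - _).
  rewrite [RHS]sum_shift.
  apply: eq_big_nat => s hs.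
  by have -> : (ks i + r - (ks i + s) - 1 = r - s - 1)%N by lia.
by rewrite E mulmxA pinvL_K ?mul1mx // => v; apply: obs_inj.
Qed.

Lemma kappa_eq i : (1 <= i <= istar)%N ->
  kappa hA hB hC hD y u ks istar N (phi (ks i.-1)) (ks i.-1) (ks i)
  = invmx (T (phi (ks i.-1))) *m x (ks i).
Proof.
case: i => [//|i] /= hi.
have hj := phi_ks (leqW (ltnW hi)).
have hk := Hinc (ltnW hi).
set d := (ks i.+1 - ks i)%N.
have ek : ks i.+1 = (ks i + d)%N by rewrite /d subnKC // ltnW.
rewrite /kappa (xhat_eq (ltnW hi)) ek (seg_state (ltnW hi) (leqnn _)) addKn -/d.
rewrite mulmxDr mulmx_sumr; congr (_ + _).
  by rewrite HhA // mxpow_conj ?HTu // !mulmxA -(mulmxA _ (T _)) mulmxV ?HTu // mulmx1.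
apply: eq_bigr => l _.
by rewrite HhA // HhB // mxpow_conj ?HTu // !mulmxA -(mulmxA _ (T _)) mulmxV ?HTu // mulmx1.
Qed.

Lemma Zvec_eq i : (i <= istar)%N ->
  Zvec hA hB hC hD y u ks istar N (phi (ks i)) (ks i)
  = obsmx (qq ks istar N) (hC (phi (ks i))) (hA (phi (ks i))) *m (invmx (T (phi (ks i))) *m x (ks i)).
Proof.
move=> hi; rewrite /Zvec /sigstack /obsmx colstack_mul; apply: colstack_ext => r hr.
by rewrite zeta_eq ?gap_qq.
Qed.

Lemma Ups_eq t : (t.+1 < sigma)%N ->
  Ups hA hB hC hD y u phi ks istar N t = invmx (T t.+1) *m T t.
Proof.
move=> ht; have ht' : (t < sigma)%N by apply: ltnW.
set O := obsmx (qq ks istar N) (hC t.+1) (hA t.+1).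
set M := invmx (T t.+1) *m T t.
have hZ : Zmat hA hB hC hD y u phi ks istar N t t.+1
          = O *m M *m Psi hA hB hC hD y u phi ks istar N t t.+1.
  apply/matrixP => r c.
  have hc := mem_nth 0%N (ltn_ord c).
  move: hc; rewrite mem_filter mem_iota => /andP[/andP[/eqP h1 /eqP h2] hi].
  set i := nth 0%N _ c in h1 h2 hi.
  have hi' : (1 <= i <= istar)%N by lia.
  have -> : (O *m M *m Psi hA hB hC hD y u phi ks istar N t t.+1) r c
          = (O *m M *m col c (Psi hA hB hC hD y u phi ks istar N t t.+1)) r 0.
    by rewrite colE mulmxA -colE !mxE.
  have -> : col c (Psi hA hB hC hD y u phi ks istar N t t.+1) = invmx (T t) *m x (ks i).
    apply/colP => k; rewrite [LHS]mxE [LHS]mxE -/i.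
    by have := kappa_eq hi'; rewrite h1 => ->.
  rewrite [LHS]mxE -/i.
  have := Zvec_eq (i:=i) (andP hi').2; rewrite h2 => ->.
  rewrite /M -!mulmxA (mulmxA (T t)) mulmxV ?HTu // mul1mx.
  done.
rewrite /Ups hZ -/O.
set P := Psi hA hB hC hD y u phi ks istar N t t.+1.
have -> : pinvL O *m (O *m M *m P) *m pinvR P = (pinvL O *m O) *m M *m (P *m pinvR P).
  by rewrite !mulmxA.
rewrite pinvL_K; last by move=> v; apply: obs_inj.
rewrite mul1mx pinvR_K ?mulmx1 //.
by rewrite /row_free Hrank.
Qed.

Lemma invUps t : (t.+1 < sigma)%N ->
  invmx (Ups hA hB hC hD y u phi ks istar N t) = invmx (T t) *m T t.+1.
Proof.
move=> ht; have ht' : (t < sigma)%N by apply: ltnW.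
rewrite Ups_eq //; apply: inv_unique.
by rewrite -mulmxA (mulmxA (T t)) mulmxV ?HTu // mul1mx mulVmx ?HTu.
Qed.

Lemma Ups1_eq mu : (mu < sigma)%N ->
  Ups1 hA hB hC hD y u phi ks istar N mu = invmx (T 0%N) *m T mu.
Proof.
move=> hmu.
have gen : forall k a (M0 : 'M[R]_n), (a + k < sigma)%N ->
  foldr (fun t M => invmx (Ups hA hB hC hD y u phi ks istar N t) *m M) M0 (iota a k)
  = invmx (T a) *m T (a + k)%N *m M0.
  elim=> [|k IH] a M0 h /=.
    by rewrite addn0 mulVmx ?mul1mx // HTu //; lia.
  rewrite IH; last by lia.
  rewrite invUps; last by lia.
  rewrite !mulmxA -(mulmxA _ (T a.+1)) mulmxV; last by apply: HTu; lia.
  by rewrite mulmx1 addSnnS.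
by rewrite /Ups1 (gen mu 0%N 1%:M) ?add0n // mulmx1.
Qed.

Lemma checkA_eq j : (j < sigma)%N ->
  checkA hA hB hC hD y u phi ks istar N j = invmx (T 0%N) *m A j *m T 0%N.
Proof.
move=> hj; have h0 : (0 < sigma)%N by lia.
have iU : invmx (Ups1 hA hB hC hD y u phi ks istar N j) = invmx (T j) *m T 0%N.
  rewrite Ups1_eq //; apply: inv_unique.
  by rewrite -mulmxA (mulmxA (T j)) mulmxV ?HTu // mul1mx mulVmx ?HTu.
rewrite /checkA iU Ups1_eq // HhA //.
rewrite !mulmxA -(mulmxA _ (T j) (invmx (T j))) mulmxV ?HTu // mulmx1.
by rewrite -(mulmxA _ (T j) (invmx (T j))) mulmxV ?HTu // mulmx1.
Qed.

Lemma checkB_eq j : (j < sigma)%N ->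
  checkB hA hB hC hD y u phi ks istar N j = invmx (T 0%N) *m B j.
Proof.
move=> hj; rewrite /checkB Ups1_eq // HhB // !mulmxA -(mulmxA _ (T j)).
by rewrite mulmxV ?HTu // mulmx1.
Qed.

Lemma checkC_eq j : (j < sigma)%N ->
  checkC hA hB hC hD y u phi ks istar N j = C j *m T 0%N.
Proof.
move=> hj; have h0 : (0 < sigma)%N by lia.
have iU : invmx (Ups1 hA hB hC hD y u phi ks istar N j) = invmx (T j) *m T 0%N.
  rewrite Ups1_eq //; apply: inv_unique.
  by rewrite -mulmxA (mulmxA (T j)) mulmxV ?HTu // mul1mx mulVmx ?HTu.
by rewrite /checkC iU HhC // !mulmxA -(mulmxA _ (T j)) mulmxV ?HTu // mulmx1.
Qed.

Lemma state_eq (phi' : nat -> nat) (u' : nat -> 'cV[R]_m) (x0 : 'cV[R]_n) :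
  (forall k, (phi' k < sigma)%N) -> forall k,
  lss_state (checkA hA hB hC hD y u phi ks istar N) (checkB hA hB hC hD y u phi ks istar N)
    phi' u' (invmx (T 0%N) *m x0) k = invmx (T 0%N) *m lss_state A B phi' u' x0 k.
Proof.
move=> hp; have h0 : (0 < sigma)%N by have := hp 0%N; lia.
elim=> [//|k IH] /=.
rewrite IH checkA_eq // checkB_eq // mulmxDr; congr (_ + _).
by rewrite -!mulmxA mulKVmx ?HTu.
by rewrite mulmxA.
Qed.

Lemma all_parts :
  (forall mu, (mu < sigma)%N ->
     Ups1 hA hB hC hD y u phi ks istar N mu = invmx (T 0%N) *m T mu)
  /\
  (forall (phi' : nat -> nat) (u' : nat -> 'cV[R]_m) (x0 : 'cV[R]_n),
     (forall k, (phi' k < sigma)%N) ->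
     forall k,
       lss_out (checkA hA hB hC hD y u phi ks istar N)
               (checkB hA hB hC hD y u phi ks istar N)
               (checkC hA hB hC hD y u phi ks istar N)
               (checkD hD) phi' u' (invmx (T 0%N) *m x0) k
       = lss_out A B C D phi' u' x0 k)
  /\
  (forall (j0 j1 : nat) (w : seq nat),
     (j0 < sigma)%N -> (j1 < sigma)%N -> all (fun j => (j < sigma)%N) w ->
     lss_markov (checkA hA hB hC hD y u phi ks istar N)
                (checkB hA hB hC hD y u phi ks istar N)
                (checkC hA hB hC hD y u phi ks istar N) j0 w j1
     = lss_markov A B C j0 w j1
     /\ checkD hD j1 = D j1).
Proof.
split; first exact: Ups1_eq.
split.
  move=> phi' u' x0 hp k; have h0 : (0 < sigma)%N by have := hp 0%N; lia.
  rewrite /lss_out state_eq // checkC_eq // /checkD HhD //; congr (_ + _).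
  by rewrite -!mulmxA mulKVmx ?HTu.
move=> j0 j1 w hj0 hj1 hw; have h0 : (0 < sigma)%N by lia.
split; last by rewrite /checkD HhD.
have gen : forall (w : seq nat) (M0 : 'M[R]_n), all (fun j => (j < sigma)%N) w ->
  foldl (fun M i => checkA hA hB hC hD y u phi ks istar N i *m M)
        (invmx (T 0%N) *m M0 *m T 0%N) w
  = invmx (T 0%N) *m foldl (fun M i => A i *m M) M0 w *m T 0%N.
  elim=> [//|a w' IH] M0 /= /andP[ha hw'].
  rewrite -IH //; congr foldl.
  rewrite checkA_eq // !mulmxA -(mulmxA _ (T 0%N) (invmx (T 0%N))) mulmxV ?HTu //.
  by rewrite mulmx1.
rewrite /lss_markov /Aword.
have e1 : (1%:M : 'M[R]_n) = invmx (T 0%N) *m 1%:M *m T 0%N by rewrite mulmx1 mulVmx ?HTu.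
rewrite [X in foldl _ X w]e1 gen // checkC_eq // checkB_eq //.
rewrite !mulmxA -(mulmxA _ (T 0%N) (invmx (T 0%N))) mulmxV ?HTu // mulmx1.
by rewrite -(mulmxA (C j1)) mulmxV ?HTu // mulmx1.
Qed.
End Main.

Unset Implicit Arguments.
Set Strict Implicit.

Theorem theorem3 (R : realFieldType) (n m p sigma : nat)
  (A : nat -> 'M[R]_n) (B : nat -> 'M[R]_(n, m))
  (C : nat -> 'M[R]_(p, n)) (D : nat -> 'M[R]_(p, m))
  (N : nat) (u : nat -> 'cV[R]_m) (phi : nat -> nat) (y : nat -> 'cV[R]_p)
  (x : nat -> 'cV[R]_n)
  (ks : nat -> nat) (istar : nat)
  (hA : nat -> 'M[R]_n) (hB : nat -> 'M[R]_(n, m))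
  (hC : nat -> 'M[R]_(p, n)) (hD : nat -> 'M[R]_(p, m))
  (T : nat -> 'M[R]_n) :
  (2 <= n)%N ->
  (* the data are generated by the true LSS *)
  (forall k, (1 <= k <= N)%N -> (phi k < sigma)%N) ->
  (forall k, (1 <= k < N)%N -> x k.+1 = A (phi k) *m x k + B (phi k) *m u k) ->
  (forall k, (1 <= k <= N)%N -> y k = C (phi k) *m x k + D (phi k) *m u k) ->
  (* phi is surjective onto the discrete states *)
  (forall j, (j < sigma)%N -> exists k, (1 <= k <= N)%N /\ phi k = j) ->
  (* switching times *)
  ks 0%N = 1%N -> ks istar.+1 = N ->
  (forall i, (i <= istar)%N -> (ks i < ks i.+1)%N) ->
  (forall i k, (i <= istar)%N -> (ks i <= k < ks i.+1)%N -> phi k = phi (ks i)) ->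
  (forall i, (1 <= i <= istar)%N -> phi (ks i) <> phi (ks i).-1) ->
  (* standing assumptions on the modes *)
  (forall j, (j < sigma)%N -> minimal_lti (A j) (B j) (C j)) ->
  (forall j, (j < sigma)%N -> A j \in unitmx) ->
  (forall j, (j < sigma)%N -> bibo_stable (A j) (B j) (C j) (D j)) ->
  (n <= delta_star ks istar N)%N ->
  (* the estimates *)
  (forall j, (j < sigma)%N -> T j \in unitmx) ->
  (forall j, (j < sigma)%N -> hA j = invmx (T j) *m A j *m T j) ->
  (forall j, (j < sigma)%N -> hB j = invmx (T j) *m B j) ->
  (forall j, (j < sigma)%N -> hC j = C j *m T j) ->
  (forall j, (j < sigma)%N -> hD j = D j) ->
  (* rank condition *)
  (forall t, (t.+1 < sigma)%N -> \rank (Psi hA hB hC hD y u phi ks istar N t t.+1) = n) ->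
  (forall mu, (mu < sigma)%N ->
     Ups1 hA hB hC hD y u phi ks istar N mu = invmx (T 0%N) *m T mu)
  /\
  (forall (phi' : nat -> nat) (u' : nat -> 'cV[R]_m) (x0 : 'cV[R]_n),
     (forall k, (phi' k < sigma)%N) ->
     forall k,
       lss_out (checkA hA hB hC hD y u phi ks istar N)
               (checkB hA hB hC hD y u phi ks istar N)
               (checkC hA hB hC hD y u phi ks istar N)
               (checkD hD) phi' u' (invmx (T 0%N) *m x0) k
       = lss_out A B C D phi' u' x0 k)
  /\
  (forall (j0 j1 : nat) (w : seq nat),
     (j0 < sigma)%N -> (j1 < sigma)%N -> all (fun j => (j < sigma)%N) w ->
     lss_markov (checkA hA hB hC hD y u phi ks istar N)
                (checkB hA hB hC hD y u phi ks istar N)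
                (checkC hA hB hC hD y u phi ks istar N) j0 w j1
     = lss_markov A B C j0 w j1
     /\ checkD hD j1 = D j1).
Proof.
move=> Hn2 Hphi Hx Hy Hsurj Hks0 HksN Hinc Hseg Hchg Hmin HAu Hbibo Hdelta HTu HhA HhB HhC HhD Hrank.
exact: (all_parts Hn2 Hphi Hx Hy Hks0 HksN Hinc Hseg Hmin Hdelta HTu HhA HhB HhC HhD Hrank).
Qed.
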